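(* Let $N$ be a power of $4$ and let $S_N$ be the STOne matrix: $S_4=\frac12\begin{pmatrix}-1&1&1&1\\ 1&-1&1&1\\ 1&1&-1&1\\ 1&1&1&-1\end{pmatrix}$ and $S_{4^{k+1}}=S_4\otimes S_{4^k}$ for $k\ge1$ (Kronecker product). Let $v\in\mathbb{R}^N$, let $\mu=\mathrm{Mean}(v)\,1_N$, and define $e=S_Nv-\mu$, so that the $i$-th entry of $S_Nv$ equals $\mu_i+e(i)$. Then $\mathrm{Mean}(e)=0$ and $\mathrm{Var}(e)=\mathrm{Var}(v)$.
   Context: For $x\in\mathbb{R}^N$, $\mathrm{Mean}(x)=\frac1N\sum_{i=1}^N x_i$ and $\mathrm{Var}(x)=\frac1N\sum_{i=1}^N (x_i-\mathrm{Mean}(x))^2$. $1_N$ is the all-ones vector in $\mathbb{R}^N$. *)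

(* Defs.v *)
From mathcomp Require Import all_boot all_order all_algebra.
From mathcomp Require Export mxtens.
Set Implicit Arguments. Unset Strict Implicit. Unset Printing Implicit Defensive.
Import Order.TTheory GRing.Theory Num.Theory.
Local Open Scope ring_scope.

Definition STOne4 (R : fieldType) : 'M[R]_4 :=
  \matrix_(i < 4, j < 4) (if i == j then - 1 else 1) / 2%:R.

(* STOne k is S_{4^(k+1)}: S_4 for k = 0, and S_4 (x) S_{4^(k+1)} (Kronecker
   product, mxtens.tensmx, standard index order i*n+j) for k+1. *)
Fixpoint STOne (R : fieldType) (k : nat) : 'M[R]_(4 ^ k.+1) :=
  match k return 'M[R]_(4 ^ k.+1) with
  | 0 => castmx (esym (expn1 4), esym (expn1 4)) (STOne4 R)
  | k'.+1 => castmx (esym (expnS 4 k'.+1), esym (expnS 4 k'.+1))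
                    (tensmx (STOne4 R) (STOne R k'))
  end.

Definition Mean (R : fieldType) (N : nat) (x : 'cV[R]_N) : R :=
  (\sum_(i < N) x i 0) / N%:R.

Definition Var (R : fieldType) (N : nat) (x : 'cV[R]_N) : R :=
  (\sum_(i < N) (x i 0 - Mean x) ^+ 2) / N%:R.

Definition ones (R : fieldType) (N : nat) : 'cV[R]_N := const_mx 1.

(* Main.v *)
Require Import Defs.
From mathcomp Require Import all_boot all_order all_algebra lra.
Import Order.TTheory GRing.Theory Num.Theory.
Set Implicit Arguments. Unset Strict Implicit.
Local Open Scope ring_scope.

Definition good (R : realFieldType) n (A : 'M[R]_n) :=
  [/\ A^T = A, A *m A = 1%:M & A *m const_mx 1 = (const_mx 1 : 'cV_n)].

Lemma good_cast (R : realFieldType) n n' (e : n = n') (A : 'M[R]_n) :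
  good A -> good (castmx (e, e) A).
Proof. by case: n' / e; rewrite castmx_id. Qed.

Lemma tens1 (R : realFieldType) m n :
  (1%:M : 'M[R]_m) *t (1%:M : 'M[R]_n) = 1%:M.
Proof.
apply/matrixP=> i j.
case: (mxtens_indexP i)=> i0 i1; case: (mxtens_indexP j)=> j0 j1.
rewrite tensmxE !mxE (inj_eq (can_inj (@mxtens_indexK m n))) xpair_eqE.
by case: (i0 == j0); case: (i1 == j1); rewrite /= ?mulr1 ?mulr0 ?mul0r.
Qed.

Lemma tensc (R : realFieldType) m n :
  (const_mx 1 : 'cV[R]_m) *t (const_mx 1 : 'cV[R]_n) = const_mx 1.
Proof. by apply/matrixP=> i j; rewrite !mxE mulr1. Qed.

Lemma good_tens (R : realFieldType) m n (A : 'M[R]_m) (B : 'M[R]_n) :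
  good A -> good B -> good (A *t B).
Proof.
case=> a1 a2 a3 [b1 b2 b3]; split.
- by rewrite trmx_tens a1 b1.
- by rewrite tensmx_mul a2 b2 tens1.
- have H := tensmx_mul A B (const_mx 1 : 'cV_m) (const_mx 1 : 'cV_n).
  rewrite a3 b3 !tensc in H; exact: H.
Qed.

Lemma S4E (R : realFieldType) : STOne4 R = \matrix_(i < 4, j < 4) ((if i == j then - 1 else 1) / 2%:R).
Proof.
rewrite /STOne4.
have -> : (2%:R : 'M[R]_4)^-1 = (2%:R^-1)%:M.
  rewrite -invmx_scalar; congr invmx. by rewrite rmorphMn.
rewrite -[X in X = _]/(_ *m _) mul_mx_scalar.
apply/matrixP=> i j; rewrite !mxE mulrC. by [].
Qed.

Lemma good4 (R : realFieldType) : good (STOne4 R).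
Proof.
rewrite S4E; split.
- by apply/matrixP=> i j; rewrite !mxE eq_sym.
- apply/matrixP=> i j; rewrite !mxE !big_ord_recl big_ord0 !mxE.
  case: i => [[|[|[|[|i]]]] Hi] //; case: j => [[|[|[|[|j]]]] Hj] //=; lra.
- apply/matrixP=> i j; rewrite !mxE !big_ord_recl big_ord0 !mxE.
  case: i => [[|[|[|[|i]]]] Hi] //= ; lra.
Qed.

Lemma goodS (R : realFieldType) k : good (STOne R k).
Proof.
elim: k => [|k IH] /=; apply: good_cast; first exact: good4.
exact: good_tens (good4 R) IH.
Qed.

Lemma sumsq (R : realFieldType) n (x : 'cV[R]_n) :
  \sum_(i < n) x i 0 ^+ 2 = (x^T *m x) 0 0.
Proof. by rewrite !mxE; apply: eq_bigr => i _; rewrite !mxE expr2. Qed.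

Lemma sumE (R : realFieldType) n (x : 'cV[R]_n) :
  \sum_(i < n) x i 0 = ((const_mx 1 : 'cV_n)^T *m x) 0 0.
Proof. by rewrite !mxE; apply: eq_bigr => i _; rewrite !mxE mul1r. Qed.

Unset Implicit Arguments. Set Strict Implicit.
Theorem lemma1 (R : realFieldType) (k : nat) (v : 'cV[R]_(4 ^ k.+1)) :
  let mu := Mean v *: ones R (4 ^ k.+1) in
  let e := STOne R k *m v - mu in
  Mean e = 0 /\ Var e = Var v.
Proof.
move=> mu e.
have [S1 S2 S3] := goodS R k.
set S := STOne R k in S1 S2 S3 e *.
have N0 : ((4 ^ k.+1)%:R : R) != 0 by rewrite pnatr_eq0 expn_eq0.
have meanS : Mean (S *m v) = Mean v.
  rewrite /Mean !sumE mulmxA -{1}S1 -trmx_mul S3 //.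
have eE : forall i, e i 0 = (S *m v) i 0 - Mean v.
  by move=> i; rewrite /e /mu !mxE mulr1.
have Me : Mean e = 0.
  rewrite /Mean (eq_bigr _ (fun i _ => eE i)) sumrB sumr_const card_ord.
  by rewrite mulrBl -[X in X - _]/(Mean (S *m v)) meanS -(mulr_natr (Mean v)) mulfK // subrr.
split; first exact: Me.
rewrite /Var Me; congr (_ / _).
set w := v - Mean v *: const_mx 1.
have Sw : S *m w = S *m v - Mean v *: const_mx 1.
  by rewrite /w mulmxBr -scalemxAr S3.
transitivity (\sum_(i < 4 ^ k.+1) (S *m w) i 0 ^+ 2).
  by apply: eq_bigr => i _; rewrite subr0 eE Sw !mxE mulr1.
transitivity (\sum_(i < 4 ^ k.+1) w i 0 ^+ 2); last first.
  by apply: eq_bigr => i _; rewrite /w !mxE mulr1.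
by rewrite !sumsq trmx_mul mulmxA -(mulmxA _ S^T) S1 S2 mulmx1.
Qed.
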